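(* In the standing setting below, let $\mathcal{O}$ be the set of popular sets. Then $\mathcal{F}:=\mathcal{C}(M)\cup\mathcal{O}$ satisfies the strong circuit elimination axiom: for every $F_0,F_1\in\mathcal{F}$, $e\in F_0\cap F_1$ and $f\in F_0\triangle F_1$ there is $G\in\mathcal{F}$ with $f\in G\subseteq(F_0\cup F_1)\setminus\{e\}$.
   Context: Standing setting: $M,N$ are finitary matroids on a common ground set $E$; $\mathcal{C}(M)$ is the set of circuits of $M$; $I\in\mathcal{I}(M)\cap\mathcal{I}(N)$ is maximal among common independent sets; $\kappa:=r(N/I)$ is an uncountable regular cardinal and $r(M/I)<\kappa$. Fix a base $J_M$ of $M/I$ and a base $J_N$ of $N/I$, put $B_M:=I\cup J_M$, $B_N:=I\cup J_N$, $b:=(B_M,B_N)$. For a base $B$ of a matroid $M$, $D_M(B)$ is the digraph on $E$ with arc $ef$ iff $e\notin B$ and $f\in C_M(e,B)\setminus\{e\}$ ($C_M(e,B)$ the fundamental circuit); $D(b):=D_M(B_M)\cup D_N^{-1}(B_N)$ where $D^{-1}$ reverses all arcs. A $b$-path is a finite directed path $P$ in $D(b)$ whose initial vertex lies in $B_N\setminus B_M$; $\mathsf{ter}(P)$ is its terminal vertex and $\mathsf{ter}(\mathcal{P})=\{\mathsf{ter}(P):P\in\mathcal{P}\}$. A $b$-path-system is a set of $\kappa$ pairwise disjoint $b$-paths. A $\Delta$-system is a family of sets any two of which intersect in the same set $K$ (the kernel); its petals are $C\setminus K$. A nonempty $K\subseteq E$ is popular if there exist a $b$-path-system $\mathcal{P}$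 and a $\Delta$-system $\mathcal{D}$ of $\kappa$ many circuits of $M$ with kernel $K$ such that every petal of $\mathcal{D}$ is contained in $I\cup\mathsf{ter}(\mathcal{P})$. *)

(* Defs.v *)
From HB Require Import structures.
From mathcomp Require Import all_boot all_order all_algebra.
From mathcomp Require Import boolp classical_sets cardinality.
Set Implicit Arguments. Unset Strict Implicit. Unset Printing Implicit Defensive.
Local Open Scope classical_set_scope.

Section MatroidDefs.
Variable E : choiceType.

Definition is_maximal (P : set (set E)) (X : set E) : Prop :=
  P X /\ forall Y, P Y -> X `<=` Y -> Y = X.

Definition is_base (Ind : set (set E)) (B : set E) : Prop := is_maximal Ind B.

(* Matroid axioms on ground set [set: E] (Bruhn et al. independence axioms) *)
Definition matroid (Ind : set (set E)) : Prop :=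
  [/\ Ind set0,
      (forall X Y, Ind Y -> X `<=` Y -> Ind X),
      (forall I B, Ind I -> ~ is_base Ind I -> is_base Ind B ->
          exists x, [/\ B x, ~ I x & Ind (x |` I)]) &
      (forall I X, Ind I -> I `<=` X ->
          exists Y, is_maximal (fun Z => [/\ Ind Z, I `<=` Z & Z `<=` X]) Y)].

Definition is_circuit (Ind : set (set E)) (C : set E) : Prop :=
  ~ Ind C /\ forall C', C' `<=` C -> C' <> C -> Ind C'.

Definition finitary (Ind : set (set E)) : Prop :=
  forall C, is_circuit Ind C -> finite_set C.

Definition finitary_matroid (Ind : set (set E)) : Prop :=
  matroid Ind /\ finitary Ind.

(* independent sets of the contraction M/I, for I independent in M *)
Definition contr (Ind : set (set E)) (I : set E) : set (set E) :=
  fun J => J `&` I = set0 /\ Ind (J `|` I).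

(* arc e -> f of D_M(B): e \notin B and f \in C_M(e,B) \ {e} *)
Definition Darc (Ind : set (set E)) (B : set E) (e f : E) : Prop :=
  ~ B e /\ exists C, [/\ is_circuit Ind C, C `<=` e |` B, C f & f <> e].

(* D(b) = D_M(B_M) \cup D_N^{-1}(B_N) *)
Definition Db (M N : set (set E)) (BM BN : set E) (e f : E) : Prop :=
  Darc M BM e f \/ Darc N BN f e.

Definition bpath (M N : set (set E)) (BM BN : set E) (p : seq E) : Prop :=
  match p with
  | [::] => False
  | x :: _ => [/\ BN x, ~ BM x, uniq p &
               forall i, i.+1 < size p -> Db M N BM BN (nth x p i) (nth x p i.+1)]
  end.

Definition ter_set (P : set (seq E)) : set E :=
  [set y | exists x q, P (x :: q) /\ y = last x q].

(* b-path-system: kappa pairwise disjoint b-paths, with kappa = |kap| *)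
Definition bpath_system (M N : set (set E)) (BM BN : set E) (kap : set E)
    (P : set (seq E)) : Prop :=
  [/\ (P #= kap)%card,
      (forall p, P p -> bpath M N BM BN p) &
      (forall p q, P p -> P q -> p <> q -> forall x, x \in p -> x \notin q)].

(* popular sets; kappa := |J_N| = r(N/I), B_M = I \cup J_M, B_N = I \cup J_N *)
Definition popular (M N : set (set E)) (I JM JN : set E) (K : set E) : Prop :=
  K <> set0 /\
  exists (P : set (seq E)) (D : set (set E)),
    [/\ bpath_system M N (I `|` JM) (I `|` JN) JN P,
        (D #= JN)%card,
        (forall C, D C -> is_circuit M C),
        (forall C1 C2, D C1 -> D C2 -> C1 <> C2 -> C1 `&` C2 = K) &
        (forall C, D C -> C `\` K `<=` I `|` ter_set P)].

(* the cardinal |A| is regular: A is not covered by fewer than |A| sets each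
   of cardinality < |A| *)
Definition card_lt (T U : Type) (A : set T) (B : set U) : Prop :=
  (A #<= B)%card /\ ~ (B #<= A)%card.

Definition regular_card (A : set E) : Prop :=
  forall S : set (set E), card_lt S A -> (forall X, S X -> card_lt X A) ->
    ~ (A `<=` \bigcup_(X in S) X).

End MatroidDefs.

(* Main.v *)
Require Import Defs.
From HB Require Import structures.
From mathcomp Require Import all_boot all_order all_algebra.
From mathcomp Require Import boolp classical_sets cardinality.
From mathcomp Require Import functions finmap.
Local Open Scope classical_set_scope.
Local Open Scope card_scope.
Set Implicit Arguments. Unset Strict Implicit. Unset Printing Implicit Defensive.

Section Mat.
Variable E : choiceType.
Variable M : set (set E).
Hypothesis hM : matroid M.

Lemma m_down X Y : M Y -> X `<=` Y -> M X.
Proof. by case: hM => _ h _ _; apply: h. Qed.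

Lemma ext_base Y : M Y -> exists B, is_base M B /\ Y `<=` B.
Proof.
case: hM => _ _ _ hIM => MY.
have [B [[MB YB _] maxB]] := hIM Y setT MY (fun _ _ => I).
exists B; split => //; split => // Z MZ BZ.
apply: maxB => //; split => //; exact: subset_trans BZ.
Qed.

Lemma circ_indep C X : is_circuit M C -> X `<=` C -> X <> C -> M X.
Proof. by case=> _ h; apply: h. Qed.

Lemma circ_sub C1 C2 : is_circuit M C1 -> is_circuit M C2 -> C1 `<=` C2 -> C1 = C2.
Proof.
move=> [h1 _] h2 s; apply: contrapT => ne; apply: h1; exact: circ_indep h2 s ne.
Qed.

Lemma weak_elim C1 C2 e : is_circuit M C1 -> is_circuit M C2 -> C1 <> C2 ->
  C1 e -> C2 e -> ~ M ((C1 `|` C2) `\ e).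
Proof.
move=> hC1 hC2 ne e1 e2 MY.
have [g [g2 g1]] : exists g, C2 g /\ ~ C1 g.
  apply: contrapT => hn; apply: ne; apply: esym; apply: circ_sub => // x x2.
  by apply: contrapT => nx; apply: hn; exists x.
have ge : g <> e by move=> gE; apply: g1; rewrite gE.
have [B [bB YB]] := ext_base MY.
have Bg : B g by apply: YB; split; [right|].
have MC2g : M (C2 `\ g).
  apply: (circ_indep hC2); first by move=> x [].
  move=> h; have : (C2 `\ g) g by rewrite h.
  by case=> _; apply.
case: hM => _ _ hI3 hIM.
have [B' [[MB' C2B' B'X] maxB']] := hIM (C2 `\ g) ((B `\ g) `|` [set e]) MC2g
  (fun x '(conj x2 xg) => match pselect (x = e) with
     | left xe => or_intror xe
     | right xe => or_introl (conj (YB x (conj (or_intror x2) xe)) xg) end).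
have bB' : is_base M B'.
  apply: contrapT => nb.
  have [x [Bx nB'x MxB']] := hI3 B' B MB' nb bB.
  have [xg|xg] := pselect (x = g).
    apply: hC2.1; apply: (m_down MxB') => y y2.
    have [->|yg] := pselect (y = g); first by left.
    by right; apply: C2B'.
  apply: nB'x; have <- : x |` B' = B'.
    apply: (maxB' (x |` B')); last by move=> y hy; right.
    split => //; first by move=> y hy; right; apply: C2B'.
    by move=> y [->|]; [left; split|apply: B'X].
  by left.
have MBg : M (B `\ g) by apply: (m_down bB.1) => x [].
have nbBg : ~ is_base M (B `\ g).
  move=> [_ h]; have := h B (fst bB) (fun x => fst).
  move=> hB; have : (B `\ g) g by rewrite -hB.
  by case=> _; apply.
have [x [B'x nx Mx]] := hI3 (B `\ g) B' MBg nbBg bB'.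
have xe : x = e by case: (B'X x B'x) => //.
apply: hC1.1; apply: (m_down Mx) => y y1.
have [ye|ye] := pselect (y = e); first by left; rewrite ye -xe.
right; split; first by apply: YB; split; [left|].
by move=> yg; apply: g1; rewrite -yg.
Qed.


Definition fcard (X : set E) := #|` fset_set X|%fset.

Lemma proper_lt X Y : finite_set X -> Y `<=` X -> Y <> X -> (fcard Y < fcard X)%N.
Proof.
move=> fX YX nYX; have fY : finite_set Y := sub_finite_set YX fX.
apply: fproper_ltn_card; rewrite fproperE; apply/andP; split.
  by have := YX; rewrite fset_set_sub.
apply/negP => h; have XY : X `<=` Y by rewrite fset_set_sub.
by apply: nYX; apply/seteqP; split.
Qed.

Lemma dep_circ_n n X : finite_set X -> (fcard X <= n)%N -> ~ M X ->
  exists C, is_circuit M C /\ C `<=` X.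
Proof.
elim: n X => [|n IH] X fX cX nMX.
  have X0 : X = set0.
    apply: fset_set_inj => //.
    by apply/eqP; rewrite fset_set0 -cardfs_eq0 -leqn0.
  by case: hM => h0 _ _ _; case: nMX; rewrite X0.
have [cX'|ncX] := pselect (is_circuit M X); first by exists X; split.
have [C' [C'X nC'X nMC']] : exists C', [/\ C' `<=` X, C' <> X & ~ M C'].
  apply: contrapT => h; apply: ncX; split => // C' C'X nC'X.
  by apply: contrapT => nm; apply: h; exists C'.
have [C [hC CC']] := IH C' (sub_finite_set C'X fX)
  (leq_trans (proper_lt fX C'X nC'X) cX) nMC'.
by exists C; split => //; apply: subset_trans C'X.
Qed.

Lemma dep_circ X : finite_set X -> ~ M X -> exists C, is_circuit M C /\ C `<=` X.
Proof. by move=> fX; apply: (dep_circ_n (n := fcard X)). Qed.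

Hypothesis hfin : finitary M.

Lemma strong_elim_n n C1 C2 e f : (fcard (C1 `|` C2) <= n)%N ->
  is_circuit M C1 -> is_circuit M C2 -> C1 <> C2 -> C1 e -> C2 e -> C1 f -> ~ C2 f ->
  exists C, [/\ is_circuit M C, C f & C `<=` (C1 `|` C2) `\ e].
Proof.
elim: n C1 C2 e f => [|n IH] C1 C2 e f cn hC1 hC2 ne e1 e2 f1 f2.
  have fU : finite_set (C1 `|` C2) by rewrite finite_setU; split; apply: hfin.
  have : (fset_set (C1 `|` C2) == fset0)%fset by rewrite -cardfs_eq0 -leqn0.
  move/eqP => h0; have : (e \in fset_set (C1 `|` C2))%fset.
    by rewrite in_fset_set //; apply/mem_set; left.
  by rewrite h0.
have fU : finite_set (C1 `|` C2) by rewrite finite_setU; split; apply: hfin.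
have [C3 [hC3 C3Y]] := dep_circ (finite_setD _ fU) (weak_elim hC1 hC2 ne e1 e2).
have [C3f|nC3f] := pselect (C3 f); first by exists C3.
have [g [g3 g1]] : exists g, C3 g /\ ~ C1 g.
  apply: contrapT => hn.
  have C31 : C3 `<=` C1.
    by move=> x x3; apply: contrapT => nx; apply: hn; exists x.
  have := circ_sub hC3 hC1 C31 => h31.
  by have := C3Y e; rewrite h31 => /(_ e1) [] _; apply.
have g2 : C2 g by case: (C3Y g g3) => -[].
have e3 : ~ C3 e by move=> /C3Y [] _; apply.
have sub23 : C2 `|` C3 `<=` C1 `|` C2 by move=> x [x2|/C3Y [] //]; right.
have lt1 : (fcard (C2 `|` C3) < fcard (C1 `|` C2))%N.
  apply: proper_lt => // h; have : (C1 `|` C2) f by left.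
  by rewrite -h => -[].
have n23 : C2 <> C3 by move=> h; apply: e3; rewrite -h.
have [C4 [hC4 C4e C4s]] := IH C2 C3 g e
  (leq_trans lt1 cn) hC2 hC3 n23 g2 g3 e2 e3.
have f4 : ~ C4 f by move=> /C4s [] [] //.
have sub14 : C1 `|` C4 `<=` C1 `|` C2 by move=> x [x1|/C4s [] /sub23 //]; left.
have lt2 : (fcard (C1 `|` C4) < fcard (C1 `|` C2))%N.
  apply: proper_lt => // h; have : (C1 `|` C2) g by right.
  by rewrite -h => -[//|/C4s [] _]; apply.
have n14 : C1 <> C4 by move=> h; apply: f4; rewrite -h.
have [C5 [hC5 C5f C5s]] := IH C1 C4 e f (leq_trans lt2 cn) hC1 hC4
  n14 e1 C4e f1 f4.
exists C5; split => // x /C5s [] /sub14 h xe; split => //.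
Qed.

Lemma strong_elim C1 C2 e f :
  is_circuit M C1 -> is_circuit M C2 -> C1 <> C2 -> C1 e -> C2 e -> C1 f -> ~ C2 f ->
  exists C, [/\ is_circuit M C, C f & C `<=` (C1 `|` C2) `\ e].
Proof. exact: (strong_elim_n (leqnn _)). Qed.

End Mat.

Lemma card_le_fun T U (u0 : U) (A : set T) (B : set U) : A #<= B ->
  exists f : T -> U, {in A &, injective f} /\ (forall x, A x -> B (f x)).
Proof.
elim/Ppointed: U => U in u0 B *; first by case: (no u0).
move/pcard_leP => [g]; exists g; split; first exact: inj.
by move=> x Ax; apply: funS.
Qed.

Lemma le_of_inj T U (f : T -> U) (A : set T) (B : set U) :
  {in A &, injective f} -> (forall x, A x -> B (f x)) -> A #<= B.
Proof.
move=> fi fAB; have e := inj_card_eq fi.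
have h1 : A #<= f @` A by move: e; rewrite card_eq_le => /andP[].
apply: card_le_trans h1 _; apply: subset_card_le => _ [x Ax <-]; exact: fAB.
Qed.

Section Card.
Variable E : choiceType.
Variable JN : set E.
Hypothesis hunc : ~ countable JN.
Hypothesis hreg : regular_card JN.

Lemma JN_inf : infinite_set JN.
Proof. by move=> h; apply: hunc; apply: finite_set_countable. Qed.

Lemma finite_small T (X : set T) : finite_set X -> card_lt X JN.
Proof.
move=> fX; split.
  have [n Xn] := fX; have [Xn' _] := (card_eqPle X `I_n).1 Xn.
  apply: card_le_trans Xn' _.
  have h2 : `I_n #<= [set: nat] by apply: subset_card_le.
  apply: card_le_trans h2 _.
  by apply/infiniteP; apply: JN_inf.
move=> h; apply: JN_inf; exact: card_le_finite h fX.
Qed.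

Lemma small_le T U (X : set T) (Y : set U) : X #<= Y -> card_lt Y JN -> card_lt X JN.
Proof.
move=> XY [YJ nJY]; split; first exact: card_le_trans XY YJ.
by move=> JX; apply: nJY; apply: card_le_trans JX XY.
Qed.

Lemma reg_cover T X (Y : set T) (A : set X) (g : X -> set T) :
  JN #<= Y -> card_lt A JN -> (forall x, A x -> card_lt (g x) JN) ->
  ~ (Y `<=` \bigcup_(x in A) g x).
Proof.
move=> JY sA sg cov.
have [y0 _] : exists y, Y y.
  apply: contrapT => hn; have Y0 : Y = set0.
    by apply/seteqP; split => // x Yx; apply: hn; exists x.
  have := JY; rewrite Y0 => /card_le0P J0; apply: JN_inf; rewrite J0.
  exact: finite_set0.
have [h [hi hY]] := card_le_fun y0 JY.
pose S := [set (JN `&` h @^-1` (g x)) | x in A].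
refine (hreg _ _ (_ : JN `<=` \bigcup_(Z in S) Z)).
- apply: small_le sA; exact: card_image_le.
- move=> _ [x Ax <-]; apply: small_le (sg x Ax).
  apply: (@le_of_inj _ _ h).
    by move=> a b /set_mem [Ja _] /set_mem [Jb _]; apply: hi; apply: mem_set.
  by move=> a [].
- move=> a Ja; have [x Ax gx] := cov _ (hY a Ja).
  by exists (JN `&` h @^-1` (g x)); [exists x|].
Qed.


Lemma reg_cover_fin T X (Y : set T) (A : set X) (g : X -> set T) (Z : set T) :
  JN #<= Y -> card_lt A JN -> (forall x, A x -> finite_set (g x)) -> finite_set Z ->
  ~ (Y `<=` Z `|` \bigcup_(x in A) g x).
Proof.
move=> JY sA fg fZ cov.
have [[a0 Aa0]|A0] := pselect (exists a, A a).
  apply: (@reg_cover T X Y A (fun x => Z `|` g x)) => //.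
    by move=> x Ax; apply: finite_small; rewrite finite_setU; split => //; apply: fg.
  move=> y /cov [Zy|[x Ax gx]]; first by exists a0 => //; left.
  by exists x => //; right.
apply: JN_inf; apply: card_le_finite fZ; apply: card_le_trans JY _.
apply: subset_card_le => y /cov [//|[x Ax _]]; case: A0; by exists x.
Qed.

Lemma pigeon T X (Y : set T) (A : set X) (cls : X -> set T) :
  JN #<= Y -> Y #<= JN -> finite_set A -> (forall x, A x -> cls x `<=` Y) ->
  Y `<=` \bigcup_(x in A) cls x -> exists2 x, A x & JN #<= cls x.
Proof.
move=> JY YJ fA cY cov; apply: contrapT => hn.
apply: (@reg_cover T X Y A cls) => //; first exact: finite_small.
move=> x Ax; split; first by apply: card_le_trans (subset_card_le (cY x Ax)) YJ.
by move=> h; apply: hn; exists x.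
Qed.

End Card.

Lemma finite_subsing T (S : set T) : (forall a b, S a -> S b -> a = b) -> finite_set S.
Proof.
move=> h; have [[a Sa]|nS] := pselect (exists a, S a).
  have -> : S = [set a] by apply/seteqP; split => [x Sx|x ->] //; apply: h.
  exact: finite_set1.
have -> : S = set0 by apply/seteqP; split => // x Sx; case: nS; exists x.
exact: finite_set0.
Qed.

Lemma finite_subsets (T : choiceType) (W : set T) : finite_set W ->
  finite_set [set X | X `<=` W].
Proof.
move=> fW.
apply: (@sub_finite_set _ _ ((fun F : {fset T} => [set` F]) @` [set` fpowerset (fset_set W)])).
  move=> X XW; have fX := sub_finite_set XW fW.
  exists (fset_set X); last exact: fset_setK.
  by rewrite /= fpowersetE -fset_set_sub.
apply: finite_image; exact: finite_fset.
Qed.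


Lemma neq0_ex T (A : set T) : A <> set0 -> exists x, A x.
Proof.
move=> h; apply: contrapT => hn; apply: h; apply/seteqP; split => // x Ax.
by case: hn; exists x.
Qed.

Definition tl (E : Type) (q : seq E) (y : E) : Prop :=
  exists x r, q = x :: r /\ y = last x r.

Definition pathsOf (E : eqType) (K : set E) (P : set (seq E)) (C : set E) :=
  [set q | P q /\ exists y, tl q y /\ (C `\` K) y].

Definition Vs (E : eqType) (K : set E) (P : set (seq E)) (C : set E) :=
  (C `\` K) `|` \bigcup_(q in pathsOf K P C) [set x | x \in q].

Lemma tl_in (E : eqType) (q : seq E) y : tl q y -> y \in q.
Proof. by move=> [x [r [-> ->]]]; apply: mem_last. Qed.

Lemma tl_fun (E : Type) (q : seq E) y y' : tl q y -> tl q y' -> y = y'.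
Proof. by move=> [x [r [-> ->]]] [x' [r' [[<- <-] ->]]]. Qed.

Lemma ter_tl (E : choiceType) (P : set (seq E)) y :
  ter_set P y <-> exists q, P q /\ tl q y.
Proof.
split => [[x [q [Pq ->]]]|[q [Pq [x [r [qe ->]]]]]].
  by exists (x :: q); split => //; exists x, q.
by exists x, r; rewrite -qe.
Qed.

Section Main.
Variables (E : choiceType) (M N : set (set E)) (I JM JN : set E).
Let BM := I `|` JM.
Let BN := I `|` JN.
Hypothesis hM : finitary_matroid M.
Hypothesis hunc : ~ countable JN.
Hypothesis hreg : regular_card JN.

Lemma path_uniq P q q' x : bpath_system M N BM BN JN P -> P q -> P q' ->
  x \in q -> x \in q' -> q = q'.
Proof.
move=> [_ _ hd] Pq Pq' xq xq'; apply: contrapT => ne.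
by have := hd _ _ Pq Pq' ne x xq; rewrite xq'.
Qed.

Lemma path_head P q : bpath_system M N BM BN JN P -> P q ->
  exists x r, q = x :: r /\ JN x.
Proof.
move=> [_ hb _] Pq; have := hb _ Pq; case: q Pq => // x r _ [BNx nBMx _ _].
exists x, r; split => //; case: BNx => // Ix; case: nBMx; by left.
Qed.

Lemma pathsOf_fin K P C : bpath_system M N BM BN JN P -> finite_set (C `\` K) ->
  finite_set (pathsOf K P C).
Proof.
move=> hP fC.
apply: (@sub_finite_set _ _ (\bigcup_(y in C `\` K) [set q | P q /\ tl q y])).
  by move=> q [Pq [y [ty Cy]]]; exists y.
apply: bigcup_finite => // y _; apply: finite_subsing => q q' [Pq tq] [Pq' tq'].
exact: (path_uniq hP Pq Pq' (tl_in tq) (tl_in tq')).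
Qed.

Lemma Vs_fin K P C : bpath_system M N BM BN JN P -> finite_set C ->
  finite_set (Vs K P C).
Proof.
move=> hP fC; have fCK : finite_set (C `\` K) by apply: finite_setD.
rewrite /Vs finite_setU; split => //.
apply: bigcup_finite; first exact: pathsOf_fin.
move=> q _; exact: finite_seq.
Qed.

Definition avoid K D P := forall (X : Type) (A : set X) (g : X -> set E) (Z : set E),
  card_lt A JN -> (forall x, A x -> finite_set (g x)) -> finite_set Z ->
  exists2 C, D C & Vs K P C `&` (Z `|` \bigcup_(x in A) g x) = set0.

Definition side K D P := [/\ finite_set K,
  (forall C, D C -> is_circuit M C /\ K `<=` C),
  (forall C, D C -> C `\` K `<=` I `|` ter_set P),
  bpath_system M N BM BN JN P & avoid K D P].

Lemma side_P K D P : side K D P -> bpath_system M N BM BN JN P.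
Proof. by case. Qed.

Lemma circ_side C P : is_circuit M C -> bpath_system M N BM BN JN P ->
  side C [set C] P.
Proof.
move=> hC hP; split => //.
- by case: hM => _ hf; apply: hf.
- by move=> _ ->; split.
- by move=> _ -> x [].
move=> X A g Z _ _ _; exists C => //.
apply/seteqP; split => // x [[[] //|[q [_ [y [_ []]]]]] //].
Qed.



Lemma path_avoid P X (A : set X) (g : X -> set E) (Z : set E) :
  bpath_system M N BM BN JN P -> card_lt A JN ->
  (forall x, A x -> finite_set (g x)) -> finite_set Z ->
  exists2 p, P p & [set x | x \in p] `&` (Z `|` \bigcup_(x in A) g x) = set0.
Proof.
move=> hP sA fg fZ; apply: contrapT => nex.
pose badp (W : set E) := [set q | P q /\ exists y, W y /\ y \in q].
have fb : forall W, finite_set W -> finite_set (badp W).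
  move=> W fW; apply: (@sub_finite_set _ _ (\bigcup_(y in W) [set q | P q /\ y \in q])).
    by move=> q [Pq [y [Wy yq]]]; exists y.
  apply: bigcup_finite => // y _; apply: finite_subsing => q q' [Pq yq] [Pq' yq'].
  exact: path_uniq hP Pq Pq' yq yq'.
have JP : JN #<= P by case: hP => h _ _; have := card_esym h; rewrite card_eq_le => /andP[].
apply: (reg_cover_fin hunc hreg (Y := P) (A := A) (g := fun x => badp (g x)) (Z := badp Z)) => //.
- by move=> x Ax; apply: fb; apply: fg.
- exact: fb.
move=> q Pq.
have [y [yq [Zy|[x Ax gy]]]] : exists y, ([set x | x \in q] `&` (Z `|` \bigcup_(x in A) g x)) y.
  by apply: neq0_ex => h; apply: nex; exists q.
  by left; split => //; exists y.
by right; exists x => //; split => //; exists y.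
Qed.

Section Pop.
Variables (K : set E) (P : set (seq E)) (D : set (set E)).
Hypothesis hP : bpath_system M N BM BN JN P.
Hypothesis hD : D #= JN.
Hypothesis hDc : forall C, D C -> is_circuit M C.
Hypothesis hDK : forall C1 C2, D C1 -> D C2 -> C1 <> C2 -> C1 `&` C2 = K.
Hypothesis hDp : forall C, D C -> C `\` K `<=` I `|` ter_set P.

Lemma JN_le_D : JN #<= D.
Proof. by have := card_esym hD; rewrite card_eq_le => /andP[]. Qed.

Lemma D_other C : D C -> exists C2, D C2 /\ C2 <> C.
Proof.
move=> DC; apply: contrapT => hn; apply: (JN_inf hunc).
apply: card_le_finite JN_le_D _; apply: (@sub_finite_set _ _ [set C]) => //.
by move=> C2 DC2; apply: contrapT => ne; apply: hn; exists C2.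
Qed.

Lemma D_K C : D C -> K `<=` C.
Proof.
move=> DC; have [C2 [DC2 ne]] := D_other DC.
by rewrite -(hDK DC DC2 (fun h => ne (esym h))) => x [].
Qed.

Lemma petal_uniq C1 C2 y : D C1 -> D C2 -> (C1 `\` K) y -> (C2 `\` K) y -> C1 = C2.
Proof.
move=> D1 D2 [y1 yK] [y2 _]; apply: contrapT => ne.
by apply: yK; rewrite -(hDK D1 D2 ne).
Qed.

Let bad (W : set E) := [set C | D C /\ exists y, W y /\ Vs K P C y].

Lemma bad_fin W : finite_set W -> finite_set (bad W).
Proof.
move=> fW.
pose b1 y := [set C | D C /\ (C `\` K) y].
pose b2 y := [set C | D C /\ exists q, [/\ P q, y \in q & exists z, tl q z /\ (C `\` K) z]].
apply: (@sub_finite_set _ _ (\bigcup_(y in W) (b1 y `|` b2 y))).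
  move=> C [DC [y [Wy [Cy|[q [Pq [z [tz Cz]]] yq]]]]]; exists y => //; first by left.
  by right; split => //; exists q; split => //; exists z.
apply: bigcup_finite => // y _; rewrite finite_setU; split; apply: finite_subsing.
  by move=> C1 C2 [D1 h1] [D2 h2]; apply: petal_uniq h1 h2.
move=> C1 C2 [D1 [q1 [P1 y1 [z1 [t1 c1]]]]] [D2 [q2 [P2 y2 [z2 [t2 c2]]]]].
have eq := path_uniq hP P1 P2 y1 y2; subst q2.
have ez := tl_fun t1 t2; subst z2.
exact: petal_uniq c1 c2.
Qed.

Lemma pop_side : side K D P.
Proof.
have [x0 Jx0] : exists x, JN x.
  apply: neq0_ex => J0; apply: (JN_inf hunc); rewrite J0; exact: finite_set0.
have [C0 DC0] : exists C, D C.
  apply: neq0_ex => D0; have := JN_le_D; rewrite D0 => /card_le0P J0.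
  by have := Jx0; rewrite J0.
have fC0 : finite_set C0 by case: hM => _ hf; apply: hf; apply: hDc.
split => //.
- exact: sub_finite_set (D_K DC0) fC0.
- by move=> C DC; split; [apply: hDc|apply: D_K].
move=> X A g Z sA fg fZ; apply: contrapT => nex.
apply: (reg_cover_fin hunc hreg (Y := D) (A := A) (g := fun x => bad (g x)) (Z := bad Z)).
- exact: JN_le_D.
- exact: sA.
- by move=> x Ax; apply: bad_fin; apply: fg.
- exact: bad_fin.
move=> C DC.
have [y [Vy [Zy|[x Ax gy]]]] : exists y, (Vs K P C `&` (Z `|` \bigcup_(x in A) g x)) y.
  by apply: neq0_ex => h; apply: nex; exists C.
  by left; split => //; exists y.
by right; exists x => //; split => //; exists y.
Qed.

End Pop.

Lemma disjP T (A B : set T) : A `&` B = set0 <-> (forall y, A y -> B y -> False).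
Proof.
split => [h y a b|h].
  have : (A `&` B) y by split.
  by rewrite h.
by apply/seteqP; split => // y [a b]; case: (h y a b).
Qed.

Section Two.
Variables (K0 K1 : set E) (D0 D1 : set (set E)) (P0 P1 : set (seq E)).
Hypothesis s0 : side K0 D0 P0.
Hypothesis s1 : side K1 D1 P1.
Variables (e f : E).
Hypothesis e0 : K0 e.
Hypothesis e1 : K1 e.
Hypothesis hf : (K0 f /\ ~ K1 f) \/ (K1 f /\ ~ K0 f).

Definition Tup := (set E * set E * seq E)%type.
Definition Vt (t : Tup) := Vs K0 P0 t.1.1 `|` Vs K1 P1 t.1.2 `|` [set x | x \in t.2].
Definition vdisj (t : Tup) := [/\
  Vs K0 P0 t.1.1 `&` Vs K1 P1 t.1.2 = set0,
  [set x | x \in t.2] `&` (Vs K0 P0 t.1.1 `|` Vs K1 P1 t.1.2) = set0 &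
  Vt t `&` (K0 `|` K1) = set0].
Definition valid (t : Tup) := [/\ D0 t.1.1, D1 t.1.2, P0 t.2 & vdisj t].
Definition compat (S : set Tup) := (forall t, S t -> valid t) /\
  (forall t u, S t -> S u -> t <> u -> Vt t `&` Vt u = set0).

Lemma Vt_fin t : valid t -> finite_set (Vt t).
Proof.
case: t => [[C C'] p] [/= DC DC' Pp _].
case: s0 => _ hc0 _ hP0 _; case: s1 => _ hc1 _ hP1 _.
have fin0 : finite_set C by case: hM => _ hf'; apply: hf'; case: (hc0 _ DC).
have fin1 : finite_set C' by case: hM => _ hf'; apply: hf'; case: (hc1 _ DC').
rewrite /Vt 2!finite_setU; split; [split|].
- exact: Vs_fin.
- exact: Vs_fin.
- exact: finite_seq.
Qed.

Let hd (t : Tup) := head e t.2.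

Lemma hd_prop t : valid t -> JN (hd t) /\ Vt t (hd t).
Proof.
case: t => [[C C'] p] [/= DC DC' Pp _].
case: s0 => _ _ _ hP0 _.
have [x [r [pe Jx]]] := path_head hP0 Pp.
by rewrite /hd /= pe; split => //; right; rewrite /= inE eqxx.
Qed.

Lemma compat_S_le S : compat S -> S #<= JN.
Proof.
move=> [hv hc]; apply: (@le_of_inj _ _ hd).
  move=> t u /set_mem St /set_mem Su htu; apply: contrapT => ne.
  have := hc _ _ St Su ne; rewrite disjP => /(_ (hd t)); apply.
    exact: (hd_prop (hv _ St)).2.
  rewrite htu; exact: (hd_prop (hv _ Su)).2.
by move=> t St; exact: (hd_prop (hv _ St)).1.
Qed.

Lemma compat_chain (F : set (set Tup)) : F `<=` compat -> total_on F subset ->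
  compat (\bigcup_(X in F) X).
Proof.
move=> Fc tot; split.
  by move=> t [X FX Xt]; apply: (Fc X FX).1.
move=> t u [X FX Xt] [Y FY Yu] ne.
have [XY|YX] := tot X Y FX FY.
  by apply: (Fc Y FY).2 => //; apply: XY.
by apply: (Fc X FX).2 => //; apply: YX.
Qed.

Lemma exists_big : exists S, compat S /\ JN #<= S.
Proof.
have [S [cS maxS]] := @Zorn_bigcup Tup compat compat_chain.
exists S; split => //; apply: contrapT => nJS.
have sS : card_lt S JN := conj (compat_S_le cS) nJS.
case: s0 => fK0 hc0 _ hP0 av0; case: s1 => fK1 hc1 _ hP1 av1.
have fZ : finite_set (K0 `|` K1) by rewrite finite_setU.
have fV : forall t, S t -> finite_set (Vt t) by move=> t St; apply: Vt_fin; apply: cS.1.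
have [C DC hC] := av0 Tup S Vt (K0 `|` K1) sS fV fZ.
have fC : finite_set C by case: hM => _ hf'; apply: hf'; case: (hc0 _ DC).
have fVC : finite_set (Vs K0 P0 C) by apply: Vs_fin.
have fZ1 : finite_set ((K0 `|` K1) `|` Vs K0 P0 C) by rewrite finite_setU.
have [C' DC' hC'] := av1 Tup S Vt ((K0 `|` K1) `|` Vs K0 P0 C) sS fV fZ1.
have fC' : finite_set C' by case: hM => _ hf'; apply: hf'; case: (hc1 _ DC').
have fVC' : finite_set (Vs K1 P1 C') by apply: Vs_fin.
have fZ2 : finite_set ((K0 `|` K1) `|` Vs K0 P0 C `|` Vs K1 P1 C').
  by rewrite 2!finite_setU.
have [p Pp hp] := path_avoid hP0 sS fV fZ2.
move: hC hC' hp; rewrite !disjP => hC hC' hp.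
pose t : Tup := (C, C', p).
have vt : valid t.
  split => //; split; rewrite disjP /=.
  - by move=> y y0 y1; apply: (hC' y y1); left; right.
  - by move=> y yp [y0|y1]; apply: (hp y yp); left; [left; right|right].
  - move=> y [[y0|y1]|yp] yK.
    + by apply: (hC y y0); left.
    + by apply: (hC' y y1); left; left.
    + by apply: (hp y yp); left; left; left.
have [x [r [pe _]]] := path_head hP0 Pp.
have xp : x \in p by rewrite pe inE eqxx.
have nt : ~ S t.
  by move=> St; apply: (hp x xp); right; exists t => //; right.
have hU : forall u y, S u -> Vt u y -> Vt t y -> False.
  move=> u y Su yu [[y0|y1]|yp].
  - by apply: (hC y y0); right; exists u.
  - by apply: (hC' y y1); right; exists u.
  - by apply: (hp y yp); right; exists u.
apply: (maxS (S `|` [set t])).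
  split; first by move=> u Su; left.
  by move=> h; apply: nt; apply: (h t); right.
split.
  by move=> u [Su|->] //; apply: cS.1.
move=> u v [Su|->] [Sv|->] ne.
- by apply: cS.2.
- by rewrite disjP => y yu yt; apply: hU Su yu yt.
- by rewrite disjP => y yt yv; apply: hU Sv yv yt.
- by case: ne.
Qed.

Lemma elim_t t : exists G, valid t ->
  [/\ is_circuit M G, G f & G `<=` (t.1.1 `|` t.1.2) `\ e].
Proof.
have [vt|nvt] := pselect (valid t); last by exists set0.
case: t vt => [[C C'] p] vt; case: (vt) => /= DC DC' Pp [_ _ hK].
move: hK; rewrite disjP => hK.
case: s0 => _ hc0 _ _ _; case: s1 => _ hc1 _ _ _.
have [hC KC] := hc0 _ DC; have [hC' KC'] := hc1 _ DC'.
case: hM => hm hfin.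
case: hf => [[f0 nf1]|[f1 nf0]].
  have nC'f : ~ C' f.
    by move=> C'f; apply: (hK f); [left; right; left; split|left].
  have ne : C <> C' by move=> h; apply: nC'f; rewrite -h; apply: KC.
  have [G [hG Gf GC]] := strong_elim hm hfin hC hC' ne (KC _ e0) (KC' _ e1) (KC _ f0) nC'f.
  by exists G.
have nCf : ~ C f.
  by move=> Cf; apply: (hK f); [left; left; left; split|right].
have ne : C' <> C by move=> h; apply: nCf; rewrite -h; apply: KC'.
have [G [hG Gf GC]] := strong_elim hm hfin hC' hC ne (KC' _ e1) (KC _ e0) (KC' _ f1) nCf.
by exists G => _; split => // y /GC; rewrite setUC.
Qed.

Lemma two_main : exists G,
  [/\ is_circuit M G \/ popular M N I JM JN G, G f & G `<=` (K0 `|` K1) `\ e].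
Proof.
have [S [cS JS]] := exists_big.
have SJ := compat_S_le cS.
have [Gf hGf] := choice elim_t.
pose tr t := Gf t `&` (K0 `|` K1).
pose cls T := [set t | S t /\ tr t = T].
have fK : finite_set (K0 `|` K1) by case: s0; case: s1 => *; rewrite finite_setU.
have fA : finite_set (tr @` S).
  apply: sub_finite_set (finite_subsets fK) => _ [t _ <-] y [].
  by [].
have [T0 [t0 St0 trt0] JT0] := pigeon hunc hreg JS SJ fA
  (cls := cls) (fun T _ t => fst) (fun t St => ex_intro2 _ _ (tr t) (ex_intro2 _ _ t St erefl) (conj St erefl)).
have vt : forall t, S t -> valid t := fun t St => cS.1 t St.
have Gt : forall t, S t ->
    [/\ is_circuit M (Gf t), Gf t f & Gf t `<=` (t.1.1 `|` t.1.2) `\ e].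
  by move=> t St; apply: hGf; apply: vt.
have fK01 : (K0 `|` K1) f by case: hf => -[]; [left|right].
have T0f : T0 f by rewrite -trt0; split => //; case: (Gt _ St0).
have T0sub : T0 `<=` (K0 `|` K1) `\ e.
  rewrite -trt0 => y [yG yK]; split => //; by case: (Gt _ St0) => _ _ /(_ y yG) [].
have outside : forall t y, S t -> Gf t y -> ~ (K0 `|` K1) y ->
    Vt t y /\ ((t.1.1 `\` K0) y \/ (t.1.2 `\` K1) y).
  move=> t y St yG nK; case: (Gt _ St) => _ _ /(_ y yG) [[y0|y1] _].
    have h : (t.1.1 `\` K0) y by split => // k; apply: nK; left.
    by split; [left; left; left|left].
  have h : (t.1.2 `\` K1) y by split => // k; apply: nK; right.
  by split; [left; right; left|right].
have trT : forall t, cls T0 t -> T0 `<=` Gf t.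
  by move=> t [_ <-] y [].
have [[t1 [[St1 trt1] Gt1]]|nex] := pselect (exists t, cls T0 t /\ Gf t = T0).
  exists T0; split => //; left; rewrite -Gt1; by case: (Gt _ St1).
have gt_ex : forall t, cls T0 t -> exists y, Gf t y /\ ~ (K0 `|` K1) y.
  move=> t ct; apply: contrapT => hn; apply: nex; exists t; split => //.
  apply/seteqP; split; last exact: trT.
  move=> y yG; case: ct => _ <-; split => //; apply: contrapT => nK; apply: hn.
  by exists y.
case: s0 => _ hc0 hp0 hP0 _; case: s1 => _ hc1 hp1 hP1 _.
pose Q (t : Tup) := pathsOf K0 P0 t.1.1 `|` pathsOf K1 P1 t.1.2 `|` [set t.2].
pose P2 := \bigcup_(t in cls T0) Q t.
have Qsrc : forall t q, S t -> Q t q ->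
    (P0 q /\ [set x | x \in q] `<=` Vs K0 P0 t.1.1 `|` [set x | x \in t.2]) \/
    (P1 q /\ [set x | x \in q] `<=` Vs K1 P1 t.1.2).
  move=> t q St [[q0|q1]|->].
  - by left; split; [case: q0|move=> x xq; left; right; exists q].
  - by right; split; [case: q1|move=> x xq; right; exists q].
  - left; split; last by move=> x xq; right.
    by case: (vt _ St).
have Qverts : forall t q, S t -> Q t q -> [set x | x \in q] `<=` Vt t.
  move=> t q St Qq x xq; case: (Qsrc _ _ St Qq) => -[_ h].
    by case: (h x xq) => ?; [left; left|right].
  by left; right; apply: h.
have hdisj : forall q q', P2 q -> P2 q' -> q <> q' -> forall x, x \in q -> x \notin q'.
  move=> q q' [t [St _] Qq] [u [Su _] Qq'] ne x xq; apply/negP => xq'.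
  have [tu|ntu] := pselect (t = u).
    subst u.
    case: (vt _ St) => _ _ _ [d01 d2 _]; move: d01 d2; rewrite !disjP => d01 d2.
    case: (Qsrc _ _ St Qq) => -[Pq hq]; case: (Qsrc _ _ St Qq') => -[Pq' hq'].
    - by case: hP0 => _ _ /(_ _ _ Pq Pq' ne x xq); rewrite xq'.
    - case: (hq x xq) => hx; first exact: d01 hx (hq' x xq').
      by apply: d2 hx _; right; apply: hq'.
    - case: (hq' x xq') => hx; first exact: d01 hx (hq x xq).
      by apply: d2 hx _; right; apply: hq.
    - by case: hP1 => _ _ /(_ _ _ Pq Pq' ne x xq); rewrite xq'.
  have := cS.2 _ _ St Su ntu; rewrite disjP; apply.
    exact: Qverts Qq _ xq.
  exact: Qverts Qq' _ xq'.
have P2src : forall q, P2 q -> P0 q \/ P1 q.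
  by move=> q [t [St _] Qq]; case: (Qsrc _ _ St Qq) => -[]; [left|right].
have P2hd : forall q, P2 q -> exists x r, q = x :: r /\ JN x.
  by move=> q /P2src [] Pq; [apply: path_head hP0 Pq|apply: path_head hP1 Pq].
have clsS : cls T0 `<=` S by move=> t [].
have hd2 : forall t, S t -> exists x, JN x /\ Vt t x /\ x \in t.2.
  move=> t St; case: (vt _ St) => _ _ Pp _.
  have [x [r [pe Jx]]] := path_head hP0 Pp.
  have xp : x \in t.2 by rewrite pe inE eqxx.
  by exists x; split => //; split => //; right.
have hP2 : bpath_system M N BM BN JN P2.
  split.
  - apply: Cantor_Bernstein.
      apply: (@le_of_inj _ _ (head e)).
        move=> q q' /set_mem Pq /set_mem Pq' hq; apply: contrapT => ne.
        have [x [r [qe Jx]]] := P2hd _ Pq; have [x' [r' [qe' Jx']]] := P2hd _ Pq'.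
        move: hq; rewrite qe qe' /= => xx; subst x'.
        have := hdisj _ _ Pq Pq' ne x; rewrite qe inE eqxx => /(_ isT).
        by rewrite qe' inE eqxx.
      by move=> q /P2hd [x [r [-> Jx]]].
    apply: card_le_trans JT0 _.
    apply: (@le_of_inj _ _ (fun t : Tup => t.2)).
      move=> t u /set_mem [St _] /set_mem [Su _] tu; apply: contrapT => ne.
      have [x [_ [Vx xp]]] := hd2 _ St.
      have := cS.2 _ _ St Su ne; rewrite disjP => /(_ x Vx); apply.
      by rewrite /Vt; right; rewrite /= -tu.
    by move=> t ct; exists t => //; right.
  - by move=> q /P2src [] Pq; [case: hP0 => _ h _|case: hP1 => _ h _]; apply: h.
  - exact: hdisj.
have Ginj : {in cls T0 &, injective Gf}.
  move=> t u /set_mem ct /set_mem cu tu; apply: contrapT => ne.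
  have [y [yG nK]] := gt_ex _ ct.
  have St := clsS _ ct; have Su := clsS _ cu.
  have := cS.2 _ _ St Su ne; rewrite disjP => /(_ y); apply.
    by case: (outside _ _ St yG nK).
  by rewrite tu in yG; case: (outside _ _ Su yG nK).
exists T0; split => //; right; split.
  by move=> h; have := T0f; rewrite h.
exists P2, (Gf @` cls T0); split => //.
- apply: Cantor_Bernstein.
    apply: card_le_trans (card_image_le Gf (cls T0)) _.
    exact: card_le_trans (subset_card_le clsS) SJ.
  apply: card_le_trans JT0 _; apply: (@le_of_inj _ _ Gf) => //.
- by move=> _ [t ct <-]; case: (Gt _ (clsS _ ct)).
- move=> _ _ [t ct <-] [u cu <-] ne.
  have St := clsS _ ct; have Su := clsS _ cu.
  apply/seteqP; split; last by move=> y yT; split; [apply: trT ct _ yT|apply: trT cu _ yT].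
  move=> y [yt yu]; have [yK|nK] := pselect ((K0 `|` K1) y).
    by case: ct => _ <-; split.
  have ntu : t <> u by move=> h; apply: ne; rewrite h.
  exfalso; have := cS.2 _ _ St Su ntu; rewrite disjP => /(_ y); apply.
    by case: (outside _ _ St yt nK).
  by case: (outside _ _ Su yu nK).
- move=> _ [t ct <-] y [yG nT].
  have St := clsS _ ct.
  have nK : ~ (K0 `|` K1) y by move=> yK; apply: nT; case: ct => _ <-; split.
  case: (outside _ _ St yG nK) => _ [yC|yC'].
    case: (vt _ St) => DC _ _ _.
    case: (hp0 _ DC y yC) => [Iy|/ter_tl [q [Pq tq]]]; first by left.
    right; apply/ter_tl; exists q; split => //; exists t => //.
    by left; left; split => //; exists y.
  case: (vt _ St) => _ DC' _ _.
  case: (hp1 _ DC' y yC') => [Iy|/ter_tl [q [Pq tq]]]; first by left.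
  right; apply/ter_tl; exists q; split => //; exists t => //.
  by left; right; split => //; exists y.
Qed.

End Two.

End Main.

Unset Implicit Arguments.

Theorem lemma4p3 (E : choiceType) (M N : set (set E)) (I JM JN : set E) :
  finitary_matroid M -> finitary_matroid N ->
  M I -> N I ->
  (forall X, M X -> N X -> I `<=` X -> X = I) ->
  is_base (contr M I) JM -> is_base (contr N I) JN ->
  ~ countable JN -> regular_card JN -> card_lt JM JN ->
  let F := fun X => is_circuit M X \/ popular M N I JM JN X in
  forall F0 F1 e f, F F0 -> F F1 -> F0 e -> F1 e ->
    ((F0 f /\ ~ F1 f) \/ (F1 f /\ ~ F0 f)) ->
    exists G, [/\ F G, G f & G `<=` (F0 `|` F1) `\ e].
Proof.
move=> hM _ _ _ _ _ _ hunc hreg _ F F0 F1 e f HF0 HF1 e0 e1 hf.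
have popS : forall K, popular M N I JM JN K ->
    exists D P, side M N I JM JN K D P.
  move=> K [_ [P [D [hP hD hc hDK hp]]]].
  by exists D, P; apply: (pop_side hM hunc hreg hP hD hc hDK hp).
case: HF0 => [hC0|/popS [D0 [P0 s0]]]; case: HF1 => [hC1|/popS [D1 [P1 s1]]].
- case: hM => hm hfin.
  case: hf => [[f0 nf1]|[f1 nf0]].
    have ne : F0 <> F1 by move=> h; apply: nf1; rewrite -h.
    have [G [hG Gf GC]] := strong_elim hm hfin hC0 hC1 ne e0 e1 f0 nf1.
    by exists G; split => //; left.
  have ne : F1 <> F0 by move=> h; apply: nf0; rewrite -h.
  have [G [hG Gf GC]] := strong_elim hm hfin hC1 hC0 ne e1 e0 f1 nf0.
  by exists G; split => //; [left|rewrite setUC].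
- have s0 := circ_side hM hC0 (side_P s1).
  exact: (two_main hM hunc hreg s0 s1 e0 e1 hf).
- have s1 := circ_side hM hC1 (side_P s0).
  exact: (two_main hM hunc hreg s0 s1 e0 e1 hf).
- exact: (two_main hM hunc hreg s0 s1 e0 e1 hf).
Qed.
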